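(* For every prime $p>2$ and every integer $a$ with $|a|\le 2\sqrt p$, there is a prime $\ell\neq p$ dividing $(p+1+a)(p+1-a)$. Moreover this fails for $p=2$: there is an integer $a$ with $|a|\le 2\sqrt 2$ such that $(3+a)(3-a)$ is a power of $2$.
   Context: This is the case $n=1$ (rational $p$-th Fourier coefficients) of the statement: there is $C_1$ such that for every prime $p>C_1$ and every $p$-th Fourier coefficient of degree $1$ there is a prime not over $p$ dividing $(a_p+p+1)(a_p-p-1)$; the paper states that the best such bound is $C_1=2$. *)

(* Defs.v *)
From mathcomp Require Import all_boot all_order all_algebra all_field.

(* Main.v *)
Require Import Defs.
From mathcomp Require Import all_boot all_order all_algebra all_field.
From mathcomp Require Import zify.
Import GRing.Theory Num.Theory.
Local Open Scope ring_scope.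

Lemma natpart (p n m : nat) : prime p -> (2 < p)%N -> (n + m = 2 * p + 2)%N ->
  exists l : nat, [/\ prime l, l != p & (l %| n * m)%N].
Proof.
move=> pp p2 hs.
have pick z : (1 < z)%N -> ~~ (p %| z)%N -> (z %| n * m)%N ->
   exists l : nat, [/\ prime l, l != p & (l %| n * m)%N].
  move=> z1 npz dz; exists (pdiv z); split.
  - exact: pdiv_prime.
  - apply/eqP => e; move: npz; rewrite -e; by rewrite pdiv_dvd.
  - exact: dvdn_trans (pdiv_dvd z) dz.
have np2 : ~~ (p %| 2)%N.
  apply/negP => /(dvdn_leq) h; have := h isT; lia.
have [n0|n0] := eqVneq n 0%N.
  exists 2%N; split => //; [apply/eqP; lia | by rewrite n0 mul0n dvdn0].
have [m0|m0] := eqVneq m 0%N.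
  exists 2%N; split => //; [apply/eqP; lia | by rewrite m0 muln0 dvdn0].
have [pn|pn] := boolP (p %| n)%N.
  have pm : ~~ (p %| m)%N.
    apply/negP => pm; move: np2; have : (p %| n + m)%N by rewrite dvdn_add.
    by rewrite hs (dvdn_addr _ (dvdn_mull _ (dvdnn p))) => ->.
  have [m1|m1] := ltnP 1 m.
    by apply: (pick m) => //; apply: dvdn_mull.
  have hn : n = (2 * p + 1)%N by lia.
  move: pn; rewrite hn dvdn_addr ?dvdn_mull // dvdn1 => /eqP e.
  by move: (prime_gt1 pp); rewrite e.
have [n1|n1] := ltnP 1 n.
  by apply: (pick n) => //; apply: dvdn_mulr.
have hm : m = (2 * p + 1)%N by lia.
apply: (pick m); first lia.
  by rewrite hm dvdn_addr ?dvdn_mull // dvdn1; apply/eqP=> e; move: (prime_gt1 pp); lia.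
by apply: dvdn_mull.
Qed.

Lemma bnd (p : nat) (a : int) : `|(a%:~R : algC)| <= 2 * sqrtC (p%:R) ->
  (`|a| ^+ 2 <= 4 * p%:Z)%R.
Proof.
rewrite -intr_norm => h.
have h2 : (`|a|%:~R : algC) ^+ 2 <= (2 * sqrtC p%:R) ^+ 2.
  by rewrite ler_pXn2r // ?nnegrE ?mulr_ge0 ?sqrtC_ge0 ?ler0n ?ler0z.
move: h2; rewrite exprMn sqrtCK -rmorphXn /=.
have -> : (2 : algC) ^+ 2 * p%:R = (4 * p%:Z)%:~R.
  rewrite rmorphM /= !pmulrn; congr (_ * _); by rewrite -natrX.
by move=> H; rewrite -(ler_int algC).
Qed.
Lemma bnd2 (p : nat) (a : int) : (`|a| ^+ 2 <= 4 * p%:Z)%R -> (-(p%:Z + 1) <= a <= p%:Z + 1)%R.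
Proof. move=> h. nia. Qed.

Theorem lemma2p5 :
  (forall (p : nat) (a : int), prime p -> (2 < p)%N ->
     `|(a%:~R : algC)| <= 2 * sqrtC (p%:R) ->
     exists l : nat, [/\ prime l, l != p &
       (l%:Z %| (p%:Z + 1 + a) * (p%:Z + 1 - a))%Z])
  /\
  (exists a : int, `|(a%:~R : algC)| <= 2 * sqrtC (2%:R) /\
     exists k : nat, (3 + a) * (3 - a) = (2 ^+ k : int)).
Proof.
split.
  move=> p a pp p2 /bnd /bnd2 /andP [h1 h2].
  have hn : ((absz (p%:Z + 1 + a)%R)%:Z = p%:Z + 1 + a)%R.
    by rewrite gez0_abs //; lia.
  have hm : ((absz (p%:Z + 1 - a)%R)%:Z = p%:Z + 1 - a)%R.
    by rewrite gez0_abs //; lia.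
  have [|l [lp lnp ld]] := natpart p (absz (p%:Z + 1 + a)%R) (absz (p%:Z + 1 - a)%R) pp p2.
    lia.
  exists l; split => //.
  by rewrite -hn -hm -PoszM; exact: ld.
exists 1; split.
  rewrite normr1.
  have s1 : (1 : algC) <= sqrtC 2.
    by rewrite -{1}sqrtC1 ler_sqrtC ?nnegrE ?ler0n ?ler01 // ler1n.
  apply: Order.POrderTheory.le_trans s1 _; rewrite ler_peMl ?sqrtC_ge0 ?ler0n ?ler1n //.
by exists 3%N.
Qed.
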